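(* (Comparison Lemma for continued fractions.) Let $\tilde x=(x_1,\dots,x_n)$ and $\tilde y=(y_1,\dots,y_n)$ be in $\mathbb{N}^n$ with $x_k\ge y_k$ for $k=1,\dots,n$. Then $\mu(I(\tilde x))\le\mu(I(\tilde y))$.
   Context: $\mu$ is the Gauss measure on $(0,1)$, $d\mu(\omega)=\frac{d\omega}{(\log 2)(1+\omega)}$. For $(a_1,\dots,a_n)\in\mathbb{N}^n$, the cylinder $I(a_1,\dots,a_n)$ is the set of $\omega\in(0,1)$ whose continued fraction expansion $\omega=\cfrac{1}{a_1(\omega)+\cfrac{1}{a_2(\omega)+\cdots}}$ begins with $a_1,\dots,a_n$. *)

(* Defs.v *)
From HB Require Import structures.
From mathcomp Require Import all_boot all_order all_algebra.
From mathcomp Require Import all_classical all_reals all_analysis.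
Set Implicit Arguments. Unset Strict Implicit. Unset Printing Implicit Defensive.
Import Order.TTheory GRing.Theory Num.Theory.
Local Open Scope classical_set_scope.
Local Open Scope ring_scope.

Definition gauss_map (R : realType) (w : R) : R := w^-1 - (Num.floor w^-1)%:~R.

(* Cylinder I(a_1,...,a_n): points w of (0,1) whose continued fraction
   expansion begins with a_1,...,a_n, i.e. for each k < n, T^k w <> 0
   (the expansion has not terminated) and a_{k+1}(w) = floor(1 / T^k w) = a_(k+1). *)
Definition cylinder (R : realType) (n : nat) (a : 'I_n -> nat) : set R :=
  [set w | 0 < w < 1 /\
     forall k : 'I_n, iter k (@gauss_map R) w != 0 /\
                      Num.floor ((iter k (@gauss_map R) w)^-1) = (a k)%:Z].

Definition gauss_measure (R : realType) (A : set R) : \bar R :=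
  (\int[@lebesgue_measure R]_(w in A `&` `]0%R, 1%R[) ((ln 2 * (1 + w))^-1)%:E)%E.

(* Main.v *)
From HB Require Import structures.
From mathcomp Require Import all_boot all_order all_algebra.
From mathcomp Require Import all_classical all_reals all_analysis.
From mathcomp Require Import measurable_realfun.
From mathcomp Require Import ring lra.
Require Import Defs.
Import Order.TTheory GRing.Theory Num.Theory.
Import numFieldNormedType.Exports.
Local Open Scope classical_set_scope.
Local Open Scope ring_scope.



Section S.
Variable R : realType.
Definition gF (w : R) := (ln 2)^-1 * ln (1 + w).

Lemma ln2_gt0 : 0 < ln (2:R).
Proof. by rewrite ln_gt0 // ltr1n. Qed.

Lemma gF_deriv (w : R) : 0 < 1 + w -> is_derive w 1 gF ((ln 2 * (1 + w))^-1).
Proof.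
move=> h.
have h1 : is_derive w 1 (fun x : R => 1 + x) 1.
  have -> : (fun x : R => 1 + x) = shift 1 by apply/funext => x; rewrite /shift addrC.
  exact: is_derive_shift.
have h2 : is_derive w 1 (@ln R \o (fun x : R => 1 + x)) ((1 + w)^-1 * 1).
  by apply: is_derive1_comp; apply: is_derive1_ln.
have h3 := is_deriveZ ((ln (2:R))^-1) h2.
have -> : gF = (ln (2:R))^-1 \*: (@ln R \o (fun x : R => 1 + x)) by [].
have e : (ln (2:R))^-1 *: ((1+w)^-1 * 1) = (ln 2 * (1+w))^-1 by rewrite mulr1 invfM.
rewrite -e; exact: h3.
Qed.
End S.
Arguments gF {R} w.
Arguments gF_deriv {R} w.
Arguments ln2_gt0 {R}.
Section T.
Variable R : realType.
Local Notation mu := (@lebesgue_measure R).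

Lemma gF_cont (x : R) : 0 < 1 + x -> {for x, continuous (fun w : R => gF w)}.
Proof.
move=> h; apply: differentiable_continuous; apply/derivable1_diffP.
by have [] := gF_deriv _ h.
Qed.

Lemma f_cont (x : R) : 0 < 1 + x -> {for x, continuous (fun w : R => (ln 2 * (1 + w))^-1)}.
Proof.
move=> h; apply: continuousV.
  by rewrite mulf_neq0 // gt_eqF // ln2_gt0.
apply: continuousM; first exact: cvg_cst.
apply: continuousD; first exact: cvg_cst.
exact: cvg_id.
Qed.

Lemma int_cc (l r : R) : 0 <= l -> l < r ->
  (\int[mu]_(w in `[l, r]) ((ln 2 * (1 + w))^-1)%:E = (gF r - gF l)%:E)%E.
Proof.
move=> l0 lr.
have pos : forall x, l <= x -> 0 < 1 + x.
  by move=> x lx; apply: (lt_le_trans (ltr01)); rewrite lerDl (le_trans l0).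
rewrite (@continuous_FTC2 R _ (@gF R)) //.
- apply: continuous_in_subspaceT => x; rewrite inE /= in_itv /= => /andP[lx _].
  exact: f_cont (pos _ lx).
- split.
  + move=> x; rewrite in_itv /= => /andP[lx _].
    by have [] := gF_deriv _ (pos _ (ltW lx)).
  + apply: cvg_at_right_filter; exact: gF_cont (pos _ (lexx _)).
  + apply: cvg_at_left_filter; exact: gF_cont (pos _ (ltW lr)).
- move=> x; rewrite in_itv /= => /andP[lx _].
  have [_ <-] := gF_deriv _ (pos _ (ltW lx)).
  by rewrite derive1E.
Qed.

Lemma int_oo (l r : R) : 0 <= l -> l < r ->
  (\int[mu]_(w in `]l, r[) ((ln 2 * (1 + w))^-1)%:E = (gF r - gF l)%:E)%E.
Proof.
move=> l0 lr; rewrite -(@int_cc l r l0 lr).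
rewrite -(@integral_itv_bndoo _ _ _ _ true false) //.
apply/measurable_EFinP; apply: open_continuous_measurable_fun.
  exact: interval_open.
move=> x; rewrite inE /= in_itv /= => /andP[lx _].
by apply: f_cont; apply: (lt_le_trans ltr01); rewrite lerDl (le_trans l0) // ltW.
Qed.
End T.



Lemma int_mono (R : realType) (D E : set R) (g : R -> R) : D `<=` E ->
  (forall x, E x -> 0 <= g x) ->
  (\int[@lebesgue_measure R]_(x in D) (g x)%:E <= \int[@lebesgue_measure R]_(x in E) (g x)%:E)%E.
Proof.
move=> DE g0.
rewrite !ge0_integralE; [|by move=> x /g0; rewrite lee_fin|by move=> x /DE /g0; rewrite lee_fin].
apply: ereal_sup_le => _ [h /= hD <-]; exists h => //= x.
apply: (le_trans (hD x)); rewrite /patch.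
case: ifPn => xD; first by rewrite ifT // inE; apply: DE; rewrite -inE.
by case: ifPn => // /[1!inE] /g0; rewrite lee_fin.
Qed.

Section CF.
Variable R : realType.
Local Notation T := (@gauss_map R).

Definition cylP (s : seq nat) (w : R) :=
  forall k, (k < size s)%N ->
    iter k T w != 0 /\ Num.floor ((iter k T w)^-1) = (nth 0%N s k)%:Z.

Lemma cylP_cons a s w : cylP (a :: s) w <->
  [/\ w != 0, Num.floor w^-1 = a%:Z & cylP s (T w)].
Proof.
split.
- move=> h; have [h1 h2] := h 0%N isT; split => // k ks.
  by have := h k.+1 ks; rewrite iterSr.
- case=> h1 h2 h3 [|k] ks; first by [].
  by rewrite iterSr; apply: h3.
Qed.

Definition phi (s : seq nat) (t : R) : R := foldr (fun a acc => (a%:R + acc)^-1) t s.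

Lemma intr_natE (a : nat) : (a%:Z)%:~R = a%:R :> R.
Proof. by rewrite pmulrn. Qed.

Lemma cyl_phi s w : cylP s w -> 0 <= w < 1 -> exists t, 0 <= t < 1 /\ w = phi s t.
Proof.
elim: s w => [|a s IH] w; first by move=> _ h; exists w.
move=> /cylP_cons [w0 fl hs] _.
have h1 := floor_le (w^-1); have h2 := floorD1_gt (w^-1).
rewrite fl intrD intr_natE in h1 h2 *.
have hz : 0 <= T w < 1.
  rewrite /gauss_map fl intr_natE; apply/andP; split; lra.
have [t [ht et]] := IH _ hs hz.
exists t; split => //=.
by rewrite -et /gauss_map fl intr_natE addrC subrK invrK.
Qed.

Lemma phi_cyl s t : all (fun a => 0 < a)%N s -> 0 < t < 1 ->
  0 < phi s t < 1 /\ cylP s (phi s t).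
Proof.
elim: s => [|a s IH] /=; first by move=> _ ht; split => // k.
move=> /andP[a0 sa] ht; have [hv hc] := IH sa ht.
set v := phi s t in hv hc *.
have a1 : 1 <= a%:R :> R by rewrite ler1n.
have pos : 1 < a%:R + v by move: hv => /andP[? ?]; lra.
have pos0 : 0 < a%:R + v by lra.
split.
- by rewrite invr_gt0 pos0 /= invf_lt1.
- apply/cylP_cons; split.
  + by rewrite invr_eq0 gt_eqF.
  + rewrite invrK; apply: floor_def; rewrite intrD intr_natE.
    by move: hv => /andP[? ?]; apply/andP; split; lra.
  + have -> : T (a%:R + v)^-1 = v.
      rewrite /gauss_map invrK (_ : Num.floor (a%:R + v) = a%:Z) ?intr_natE.
        by rewrite addrC addKr.
      apply: floor_def; rewrite intrD intr_natE.
      by move: hv => /andP[? ?]; apply/andP; split; lra.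
    exact: hc.
Qed.

Fixpoint cf (s : seq nat) : nat * nat * nat * nat :=
  match s with
  | [::] => (0, 1, 1, 0)%N
  | a :: s => let: (p, p', q, q') := cf s in (q, q', a * q + p, a * q' + p')%N
  end.
Definition cP s := (cf s).1.1.1.
Definition cP' s := (cf s).1.1.2.
Definition cQ s := (cf s).1.2.
Definition cQ' s := (cf s).2.

Lemma cf_cons a s : [/\ cP (a :: s) = cQ s, cP' (a :: s) = cQ' s,
  cQ (a :: s) = (a * cQ s + cP s)%N & cQ' (a :: s) = (a * cQ' s + cP' s)%N].
Proof. by rewrite /cP /cP' /cQ /cQ' /=; case: (cf s) => [[[p p'] q] q']. Qed.

Lemma cQ_pos s : all (fun a => 0 < a)%N s -> (0 < cQ s)%N.
Proof.
elim: s => [|a s IH] //= /andP[a0 sa]; have [_ _ -> _] := cf_cons a s.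
by rewrite ltn_addr // muln_gt0 a0 IH.
Qed.

Lemma cP_pos s : all (fun a => 0 < a)%N s -> s != [::] -> (0 < cP s)%N.
Proof.
case: s => [|a s] //= /andP[a0 sa] _; have [-> _ _ _] := cf_cons a s.
exact: cQ_pos.
Qed.

Lemma cf_det s : (cP' s)%:R * (cQ s)%:R - (cP s)%:R * (cQ' s)%:R = (-1) ^+ size s :> R.
Proof.
elim: s => [|a s IH]; first by rewrite /cP /cP' /cQ /cQ' /=; ring.
have [-> -> -> ->] := cf_cons a s.
rewrite /= exprS -IH !natrD !natrM; ring.
Qed.


Definition Pr s : R := (cP s)%:R.
Definition Pr' s : R := (cP' s)%:R.
Definition Qr s : R := (cQ s)%:R.
Definition Qr' s : R := (cQ' s)%:R.

Lemma phi_eq s t : all (fun a => 0 < a)%N s -> 0 <= t ->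
  phi s t = (Pr s + Pr' s * t) / (Qr s + Qr' s * t).
Proof.
move=> + t0; elim: s => [|a s IH].
  by rewrite /Pr /Pr' /Qr /Qr' /= mul0r mul1r add0r addr0 divr1.
move=> /= /andP[a0 sa]; rewrite IH //.
rewrite /Pr /Pr' /Qr /Qr'; have [-> -> -> ->] := cf_cons a s.
have q0 : 0 < (cQ s)%:R :> R by rewrite ltr0n cQ_pos.
have hq : 0 < (cQ s)%:R + (cQ' s)%:R * t :> R.
  by apply: (lt_le_trans q0); rewrite lerDl mulr_ge0.
have hp : 0 <= (cP s)%:R + (cP' s)%:R * t :> R by rewrite addr_ge0 // mulr_ge0.
have ha : 1 <= a%:R :> R by rewrite ler1n.
have hd : 0 < a%:R * ((cQ s)%:R + (cQ' s)%:R * t) + ((cP s)%:R + (cP' s)%:R * t) :> R.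
  by rewrite ltr_wpDr // mulr_gt0 // (lt_le_trans ltr01).
rewrite !natrD !natrM.
have -> : a%:R * (cQ s)%:R + (cP s)%:R + (a%:R * (cQ' s)%:R + (cP' s)%:R) * t =
  a%:R * ((cQ s)%:R + (cQ' s)%:R * t) + ((cP s)%:R + (cP' s)%:R * t) :> R by ring.
move: hq hd; move: (cQ s)%:R (cQ' s)%:R (cP s)%:R (cP' s)%:R => q q' p p' hq hd.
by field; rewrite !gt_eqF.
Qed.


Lemma cf_mono s s' : size s' = size s -> (forall k, nth 0 s' k <= nth 0 s k)%N ->
  [/\ cP s' <= cP s, cP' s' <= cP' s, cQ s' <= cQ s & cQ' s' <= cQ' s]%N.
Proof.
elim: s s' => [|a s IH] [|a' s'] //= [hsz] hk.
have [h1 h2 h3 h4] := IH s' hsz (fun k => hk k.+1).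
have ha : (a' <= a)%N := hk 0%N.
have [-> -> -> ->] := cf_cons a s; have [-> -> -> ->] := cf_cons a' s'.
by split => //; apply: leq_add => //; apply: leq_mul.
Qed.

Definition eps (s : seq nat) : R := (-1) ^+ size s.
Definition uu s := Pr s / Qr s.
Definition vv s := (Pr s + Pr' s) / (Qr s + Qr' s).
Definition GG s t := t / (Qr s * (Qr s + Qr' s * t)).
Definition lo (s : seq nat) := if odd (size s) then vv s else uu s.
Definition hi (s : seq nat) := if odd (size s) then uu s else vv s.
Definition Dr s := (Qr s + Qr' s) * (Qr s + Pr s).

Section fixed.
Variable s : seq nat.
Hypothesis hs : all (fun a => 0 < a)%N s.

Let Q0 : 0 < Qr s. Proof. by rewrite ltr0n cQ_pos. Qed.
Let Q'0 : 0 <= Qr' s. Proof. by rewrite ler0n. Qed.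
Let P0 : 0 <= Pr s. Proof. by rewrite ler0n. Qed.
Let P'0 : 0 <= Pr' s. Proof. by rewrite ler0n. Qed.

Lemma phiG t : 0 <= t -> phi s t = uu s + eps s * GG s t.
Proof.
move=> t0; rewrite phi_eq // /uu /GG /eps -cf_det.
have hq : 0 < Qr s + Qr' s * t by apply: (lt_le_trans Q0); rewrite lerDl mulr_ge0.
move: Q0 hq; rewrite /Pr /Pr' /Qr /Qr'.
move: (cQ s)%:R (cQ' s)%:R (cP s)%:R (cP' s)%:R => q q' p p' hq0 hq.
by field; rewrite !gt_eqF.
Qed.

Lemma vvG : vv s = uu s + eps s * GG s 1.
Proof. by rewrite -phiG // phi_eq // /vv !mulr1. Qed.

Lemma GG_ge0 t : 0 <= t -> 0 <= GG s t.
Proof.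
move=> t0; apply: divr_ge0 => //; apply: mulr_ge0; first exact: ltW.
by rewrite addr_ge0 ?mulr_ge0 // ltW.
Qed.

Lemma GG1_gt0 : 0 < GG s 1.
Proof. by rewrite /GG divr_gt0 // mulr_gt0 // mulr1 ltr_wpDr. Qed.

Lemma GG_le1 t : 0 <= t <= 1 -> GG s t <= GG s 1.
Proof.
move=> /andP[t0 t1].
have hq : 0 < Qr s + Qr' s * t by apply: (lt_le_trans Q0); rewrite lerDl mulr_ge0.
have hq1 : 0 < Qr s + Qr' s by rewrite ltr_wpDr.
have e : GG s 1 - GG s t = (1 - t) / ((Qr s + Qr' s) * (Qr s + Qr' s * t)).
  rewrite /GG; move: Q0 hq hq1.
  move: (Qr s) (Qr' s) => q q' hq0 hq hq1.
  by field; rewrite !gt_eqF.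
rewrite -subr_ge0 e divr_ge0 ?subr_ge0 // mulr_ge0 // ltW //.
Qed.

Lemma eps_cases : eps s = if odd (size s) then -1 else 1.
Proof. by rewrite /eps -signr_odd; case: odd; rewrite ?expr1 ?expr0. Qed.

Lemma cyl_sub w : cylP s w -> 0 <= w < 1 -> lo s <= w <= hi s.
Proof.
move=> hc hw; have [t [/andP[t0 t1] ->]] := @cyl_phi s w hc hw.
rewrite phiG // /lo /hi vvG.
have g0 := @GG_ge0 t t0.
have g1 : GG s t <= GG s 1 by apply: GG_le1; rewrite t0 ltW.
move: g0 g1; rewrite eps_cases; case: odd => g0 g1; apply/andP; split; lra.
Qed.

Lemma cyl_sup w : lo s < w < hi s -> 0 < w < 1 /\ cylP s w.
Proof.
move=> hw.
pose r := eps s * (w - uu s).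
have hr : 0 < r < GG s 1.
  move: hw; rewrite /r /lo /hi vvG eps_cases; case: odd => /andP[h1 h2]; apply/andP; split; lra.
move: hr => /andP[r0 rG].
have G1 := GG1_gt0.
have hq1 : 0 < Qr s + Qr' s by rewrite ltr_wpDr.
have eG : GG s 1 * (Qr s * (Qr s + Qr' s)) = 1.
  rewrite /GG mulr1 mul1r mulVf // gt_eqF // mulr_gt0 //.
have hden : 0 < 1 - r * Qr s * Qr' s.
  have : r * (Qr s * (Qr s + Qr' s)) < 1.
    by rewrite -eG ltr_pM2r // mulr_gt0.
  have : 0 <= r * Qr s * Qr s.
    by apply: mulr_ge0; [apply: mulr_ge0|]; apply: ltW.
  rewrite !mulrDr !mulrA => A B; lra.
pose t := r * Qr s ^+ 2 / (1 - r * Qr s * Qr' s).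
have t0 : 0 < t by rewrite /t divr_gt0 // mulr_gt0 // exprn_gt0.
have t1 : t < 1.
  rewrite /t ltr_pdivrMr // mul1r.
  have : r * (Qr s * (Qr s + Qr' s)) < 1.
    by rewrite -eG ltr_pM2r // mulr_gt0.
  rewrite expr2 !mulrDr !mulrA => A; lra.
have Gt : GG s t = r.
  rewrite /GG /t.
  move: hden Q0; move: (Qr s) (Qr' s) => q q' hd hq0.
  field; apply/andP; split; first by rewrite gt_eqF.
  have -> : q * (1 - r * q * q') + q' * (r * q ^+ 2) = q by ring.
  by rewrite gt_eqF.
have ew : w = phi s t.
  rewrite phiG ?ltW // Gt /r mulrA.
  have -> : eps s * eps s = 1 by rewrite eps_cases; case: odd; rewrite ?mulrNN mulr1.
  by rewrite mul1r addrC subrK.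
by rewrite ew; apply: phi_cyl => //; rewrite t0 t1.
Qed.


Lemma uu_ge0 : 0 <= uu s. Proof. by rewrite /uu divr_ge0 // ltW. Qed.
Lemma vv_ge0 : 0 <= vv s.
Proof. by rewrite /vv divr_ge0 // ?addr_ge0 // ltW // ltr_wpDr. Qed.

Lemma lo_ge0 : 0 <= lo s.
Proof. by rewrite /lo; case: odd; [exact: vv_ge0|exact: uu_ge0]. Qed.

Lemma lo_lt_hi : lo s < hi s.
Proof.
have := GG1_gt0; rewrite /lo /hi vvG eps_cases; case: odd => h; lra.
Qed.

Lemma one_v : 1 + vv s = (1 + uu s) * (1 + eps s / Dr s).
Proof.
have hq1 : 0 < Qr s + Qr' s by rewrite ltr_wpDr.
have hqp : 0 < Qr s + Pr s by apply: (lt_le_trans Q0); rewrite lerDl.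
rewrite /vv /uu /Dr /eps -cf_det.
move: Q0 hq1 hqp; rewrite /Pr /Pr' /Qr /Qr'.
move: (cQ s)%:R (cQ' s)%:R (cP s)%:R (cP' s)%:R => q q' p p' hq0 hq1 hqp.
by field; rewrite !gt_eqF.
Qed.

Lemma D_gt1 : s != [::] -> 1 < Dr s.
Proof.
move=> sn; rewrite /Dr /Qr /Qr' /Pr -!natrD -natrM ltr1n.
have q1 := @cQ_pos s hs; have p1 := @cP_pos s hs sn.
have h2 : (2 <= cQ s + cP s)%N by rewrite (leq_add q1 p1).
have h1 : (1 <= cQ s + cQ' s)%N by rewrite ltn_addr.
by rewrite (leq_trans _ (leq_mul h1 h2)).
Qed.

Lemma gF_diff : s != [::] -> gF (hi s) - gF (lo s) =
  (ln 2)^-1 * (if odd (size s) then - ln (1 - (Dr s)^-1) else ln (1 + (Dr s)^-1)).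
Proof.
move=> sn; have D1 := D_gt1 sn.
have Dp : 0 < Dr s by lra.
have iD : 0 < (Dr s)^-1 < 1 by rewrite invr_gt0 Dp /= invf_lt1.
have hu : 0 < 1 + uu s by have := uu_ge0; lra.
have lv : ln (1 + vv s) = ln (1 + uu s) + ln (1 + eps s / Dr s).
  rewrite one_v lnM // posrE //.
  by rewrite eps_cases; case: odd; move: iD => /andP[? ?]; rewrite ?mulN1r ?mul1r; lra.
rewrite /lo /hi /gF; move: lv; rewrite eps_cases; case: odd; rewrite ?mulN1r ?mul1r => lv.
- by rewrite lv -mulrBr; congr (_ * _); lra.
- by rewrite lv -mulrBr; congr (_ * _); lra.
Qed.

End fixed.

Lemma final_cmp sx sy : size sx = size sy -> sx != [::] ->
  all (fun a => 0 < a)%N sx -> all (fun a => 0 < a)%N sy ->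
  (forall k, nth 0 sy k <= nth 0 sx k)%N ->
  gF (hi sx) - gF (lo sx) <= gF (hi sy) - gF (lo sy).
Proof.
move=> hsz sxn hx hy hk.
have syn : sy != [::] by rewrite -size_eq0 -hsz size_eq0.
rewrite (@gF_diff sx hx sxn) (@gF_diff sy hy syn) hsz.
have Dx := @D_gt1 sx hx sxn; have Dy := @D_gt1 sy hy syn.
have Dxy : Dr sy <= Dr sx.
  have [h1 h2 h3 h4] := @cf_mono sx sy (esym hsz) hk.
  rewrite /Dr /Qr /Qr' /Pr -!natrD -!natrM ler_nat.
  by apply: leq_mul; apply: leq_add.
have iDxy : (Dr sx)^-1 <= (Dr sy)^-1.
  by rewrite lef_pV2 // posrE; lra.
have iDx : 0 < (Dr sx)^-1 < 1 by rewrite invr_gt0 /= invf_lt1 //; lra.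
have iDy : 0 < (Dr sy)^-1 < 1 by rewrite invr_gt0 /= invf_lt1 //; lra.
move: iDx iDy => /andP[x0 x1] /andP[y0 y1].
apply: ler_wpM2l; first by rewrite invr_ge0 ltW // ln2_gt0.
case: odd.
- rewrite lerN2 ler_ln ?posrE; lra.
- rewrite ler_ln ?posrE; lra.
Qed.

End CF.

Lemma nth_map_enum n (a : 'I_n -> nat) (k : 'I_n) :
  nth 0%N (map a (enum 'I_n)) k = a k.
Proof. by rewrite (nth_map k) ?nth_ord_enum // size_enum_ord. Qed.

Lemma cyl_eq (R : realType) n (a : 'I_n -> nat) :
  @cylinder R n a = [set w : R | 0 < w < 1 /\ @cylP R (map a (enum (ordinal n))) w].
Proof.
have hnth : forall k : 'I_n, nth 0%N (map a (enum 'I_n)) k = a k.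
  by move=> k; rewrite (nth_map k) ?nth_ord_enum // size_enum_ord.
apply/seteqP; split => w [hw hc]; split => //.
- move=> k; rewrite size_map size_enum_ord => kn.
  by have := hc (Ordinal kn); rewrite -[X in nth _ _ X]/(nat_of_ord (Ordinal kn)) hnth.
- move=> k; have := hc k; rewrite size_map size_enum_ord ltn_ord hnth.
  by apply.
Qed.

Theorem lemma8 (R : realType) (n : nat) (x y : 'I_n -> nat)
  (hy : forall k, (0 < y k)%N) (hxy : forall k, (y k <= x k)%N) :
  (gauss_measure (@cylinder R n x) <= gauss_measure (@cylinder R n y))%E.
Proof.
case: n x y hy hxy => [|n] x y hy hxy.
  by have -> : x = y by apply/funext => -[].
set sx := map x (enum 'I_n.+1); set sy := map y (enum 'I_n.+1).
have hsz : size sx = size sy by rewrite !size_map.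
have sxn : sx != [::] by rewrite -size_eq0 size_map size_enum_ord.
have syn : sy != [::] by rewrite -size_eq0 size_map size_enum_ord.
have ax : all (fun a => 0 < a)%N sx.
  by apply/allP => _ /mapP[k _ ->]; apply: leq_trans (hy k) (hxy k).
have ay : all (fun a => 0 < a)%N sy by apply/allP => _ /mapP[k _ ->]; apply: hy.
have hk : forall k, (nth 0 sy k <= nth 0 sx k)%N.
  move=> k; case: (ltnP k n.+1) => kn.
    have := @nth_map_enum _ x (Ordinal kn); have := @nth_map_enum _ y (Ordinal kn).
    by rewrite /= -/sx -/sy => -> ->.
  by rewrite !nth_default // size_map size_enum_ord.
have fpos : forall w : R, 0 <= w -> 0 <= (ln 2 * (1 + w))^-1.
  by move=> w w0; rewrite invr_ge0 mulr_ge0 // ?ltW ?ln2_gt0 //; lra.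
rewrite /gauss_measure !cyl_eq -/sx -/sy.
apply: (@le_trans _ _ (\int[@lebesgue_measure R]_(w in `[lo R sx, hi R sx])
                          ((ln 2 * (1 + w))^-1)%:E)%E).
  apply: int_mono.
    move=> w [[/andP[w0 w1] hc] _]; rewrite /= in_itv /=.
    by apply: (@cyl_sub R sx ax); rewrite ?w1 ?ltW.
  move=> w; rewrite /= in_itv /= => /andP[lw _]; apply: fpos.
  by apply: (le_trans _ lw); apply: lo_ge0.
rewrite (@int_cc R _ _ (@lo_ge0 R sx) (@lo_lt_hi R sx ax)).
apply: (@le_trans _ _ (\int[@lebesgue_measure R]_(w in `]lo R sy, hi R sy[)
                          ((ln 2 * (1 + w))^-1)%:E)%E).
  rewrite (@int_oo R _ _ (@lo_ge0 R sy) (@lo_lt_hi R sy ay)) lee_fin.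
  exact: final_cmp.
apply: int_mono.
  move=> w; rewrite /= in_itv /= => hw.
  have [h1 h2] := @cyl_sup R sy ay w hw.
  by split; [split|rewrite /= in_itv /=].
by move=> w [[/andP[w0 _] _] _]; apply: fpos; apply: ltW.
Qed.
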